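(* In the sleeping multi-armed bandit setting, let $(\ell_t)_{t\ge1}$ be i.i.d. random loss vectors in $[0,1]^K$ with mean vector $\mu$, where for each $t$, $\ell_t$ is independent of everything determined before the learner observes $\ell_t(k_t)$ at round $t$ (including $S_1,\dots,S_t$ and $k_1,\dots,k_t$), and let the availability sets $(S_t)$ be arbitrary with $S_t$ depending only on the past. Let $\sigma^*$ be an ordering with $\mu_{\sigma^*_1}\le\mu_{\sigma^*_2}\le\dots\le\mu_{\sigma^*_K}$. Then for any algorithm and every $k\in[K]$, $$\mathbb E\big[R_T^{\mathrm{ext}}(k)\big]\le\mathbb E\big[R_T^{\mathrm{ordering}}(\sigma^* )\big].$$
   Context: Sleeping multi-armed bandit setting: $K$ arms $[K]$. At each round $t$ a nonempty availability set $S_t\subseteq[K]$ is revealed, the learner (possibly randomized, using only $S_1,\dots,S_t$, previously observed losses and internal randomness) selects $k_t\in S_t$ and observes $\ell_t(k_t)$. External sleeping regret: $R_T^{\mathrm{ext}}(k)=\sum_{t=1}^T\big(\ell_t(k_t)-\ell_t(k)\big)\mathbf 1\{k\in S_t\}$. An ordering is a permutation $\sigma=(\sigma_1,\dots,\sigma_K)$ of $[K]$; for nonempty $S\subseteq[K]$, $\sigma(S)=\sigma_m$ with $m=\min\{i:\sigma_i\in S\}$. Ordering regret: $R_T^{\mathrm{ordering}}(\sigma)=\sum_{t=1}^T\big(\ell_t(k_t)-\ell_t(\sigma(S_t))\big)$. *)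

(* Defs.v *)
From HB Require Import structures.
From mathcomp Require Import all_boot all_order all_algebra all_fingroup.
From mathcomp Require Import all_classical all_reals all_analysis.
Set Implicit Arguments. Unset Strict Implicit. Unset Printing Implicit Defensive.
Import Order.TTheory GRing.Theory Num.Theory.
Local Open Scope classical_set_scope.
Local Open Scope ring_scope.

(* Rounds are indexed by t = 0, 1, 2, ...  (round t here = round t+1 of the paper).
   A run of the (possibly randomized) learner against the (possibly randomized)
   availability process, on a probability space (Omega, P), is described by
     ell   t j w : loss of arm j at round t,
     Avail t w   : availability set S_t,
     Pick  t w   : arm k_t chosen by the learner. *)

Definition gen_sigma {d} {Omega : measurableType d} (G : set_system Omega) :
  set_system Omega := smallest (sigma_algebra setT) G.

Definition indep_sys {d} {Omega : measurableType d} {R : realType}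
  (P : probability Omega R) (F G : set_system Omega) : Prop :=
  forall A B, F A -> G B -> P (A `&` B) = (P A * P B)%E.

Definition loss_events {d} {Omega : measurableType d} {R : realType} {K : nat}
  (ell : nat -> 'I_K -> Omega -> R) (t : nat) : set_system Omega :=
  [set E | exists j B, measurable B /\ E = ell t j @^-1` B].

(* events determined before the learner observes ell_t(k_t):
   S_s, k_s for s <= t and ell_s for s < t *)
Definition history_events {d} {Omega : measurableType d} {R : realType} {K : nat}
  (ell : nat -> 'I_K -> Omega -> R) (Avail : nat -> Omega -> {set 'I_K})
  (Pick : nat -> Omega -> 'I_K) (t : nat) : set_system Omega :=
  [set E | (exists s A, (s <= t)%N /\ E = Avail s @^-1` [set A])
        \/ (exists s i, (s <= t)%N /\ E = Pick s @^-1` [set i])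
        \/ (exists s j B, (s < t)%N /\ measurable B /\ E = ell s j @^-1` B)].

(* sigma(S) for an ordering sigma (a permutation of [K]):
   sigma_m with m the least index such that sigma_m \in S
   (x0 is an irrelevant default, used only when S is empty) *)
Definition ordering_choice {K : nat} (sigma : {perm 'I_K}) (S : {set 'I_K})
  (x0 : 'I_K) : 'I_K :=
  let s := [seq sigma i | i <- enum 'I_K] in nth x0 s (find (fun a => a \in S) s).

Definition ext_regret {Omega : Type} {R : realType} {K : nat}
  (ell : nat -> 'I_K -> Omega -> R) (Avail : nat -> Omega -> {set 'I_K})
  (Pick : nat -> Omega -> 'I_K) (T : nat) (k : 'I_K) (w : Omega) : R :=
  \sum_(t < T) (ell t (Pick t w) w - ell t k w) * (k \in Avail t w)%:R.

Definition ordering_regret {Omega : Type} {R : realType} {K : nat}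
  (ell : nat -> 'I_K -> Omega -> R) (Avail : nat -> Omega -> {set 'I_K})
  (Pick : nat -> Omega -> 'I_K) (T : nat) (sigma : {perm 'I_K}) (w : Omega) : R :=
  \sum_(t < T) (ell t (Pick t w) w
                 - ell t (ordering_choice sigma (Avail t w) (Pick t w)) w).

(* Main.v *)
Require Import Defs.
From HB Require Import structures.
From mathcomp Require Import all_boot all_order all_algebra all_fingroup.
From mathcomp Require Import all_classical all_reals all_analysis.
Import Order.TTheory GRing.Theory Num.Theory.
Local Open Scope classical_set_scope.
Local Open Scope ring_scope.

Lemma oc_spec (K : nat) (s : {perm 'I_K}) (A : {set 'I_K}) (x0 j : 'I_K) :
  j \in A -> exists m : 'I_K,
    ordering_choice s A x0 = s m /\ (m <= (s^-1)%g j)%N /\ s m \in A.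
Proof.
move=> jA; rewrite /ordering_choice.
set sq := [seq s i | i <- enum 'I_K].
have nth_sq : forall i : 'I_K, nth x0 sq i = s i.
  by move=> i; rewrite (nth_map i) ?size_enum_ord ?ltn_ord // nth_ord_enum.
have hf : (find (fun a => a \in A) sq <= (s^-1)%g j)%N.
  rewrite leqNgt; apply/negP => /(before_find x0).
  by rewrite nth_sq permKV jA.
have hlt : (find (fun a => a \in A) sq < K)%N by apply: leq_ltn_trans hf (ltn_ord _).
exists (Ordinal hlt); rewrite -nth_sq /=; split => //; split => //.
have hs : has (fun a => a \in A) sq by rewrite has_find size_map size_enum_ord.
exact: (nth_find x0 hs).
Qed.

Definition mkRV {d} {Omega : measurableType d} {R : realType} {P : probability Omega R}
  {f : Omega -> R} (mf : measurable_fun setT f) : {RV P >-> R} :=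
  HB.pack f (isMeasurableFun.Build _ _ _ _ f mf).

Lemma indep_key d (Omega : measurableType d) {R : realType} {P : probability Omega R}
  (X : Omega -> R) (mX : measurable_fun setT X) (X0 : forall w, 0 <= X w)
  (E : set Omega) (mE : measurable E)
  (ind : forall B, measurable B -> P (E `&` X @^-1` B) = (P E * P (X @^-1` B))%E) :
  (\int[P]_w (\1_E w * X w)%:E = P E * \int[P]_w (X w)%:E)%E.
Proof.
have mY : measurable_fun setT (fun w => \1_E w * X w).
  by apply: measurable_realfun.measurable_funM => //; exact: measurable_indic.
pose Y := @mkRV _ _ _ P _ mY. pose X' := @mkRV _ _ _ P _ mX.
have -> : (\int[P]_w (\1_E w * X w)%:E = 'E_P[Y])%E by rewrite expectation_def.
have -> : (\int[P]_w (X w)%:E = 'E_P[X'])%E by rewrite expectation_def.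
rewrite !ge0_expectation_ccdf; last 2 first.
- by move=> x /=; exact: X0.
- by move=> x /=; rewrite mulr_ge0 // indicE.
rewrite -ge0_integralZl //.
apply: eq_integral => r; rewrite inE /= in_itv /= andbT => r0.
rewrite /ccdf /distribution /pushforward /=.
rewrite -ind; last exact: measurable_itv.
congr (P _); apply/seteqP; split => w /=; rewrite !in_itv /= !andbT indicE.
- case: (boolP (w \in E)) => wE; rewrite ?mul1r ?mul0r.
    by move=> ?; split => //; rewrite inE in wE.
  by move=> h; have := lt_le_trans h r0; rewrite ltxx.
- by move=> [wE h]; rewrite mem_set // mul1r.
exact: measurable_funS (ccdf_measurable X').
Qed.

Lemma sum_delta (K : nat) (R : realType) (x : 'I_K -> R) (a b : 'I_K) :
  \sum_(j < K) (((j == a)%:R - (j == b)%:R) * x j) = x a - x b.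
Proof.
have h : forall c : 'I_K, \sum_(j < K) ((j == c)%:R * x j) = x c.
  move=> c; rewrite (bigD1 c) //= eqxx mul1r big1 ?addr0 //.
  by move=> j /negbTE ->; rewrite mul0r.
by under eq_bigr do rewrite mulrBl; rewrite sumrB !h.
Qed.

Section helpers.
Local Open Scope ereal_scope.

Lemma bnd_int d (Omega : measurableType d) (R : realType) (P : probability Omega R)
  (f : Omega -> R) (mf : measurable_fun setT f) (M : R)
  (hb : forall w, (`|f w| <= M)%R) :
  P.-integrable setT (fun w => (f w)%:E).
Proof.
apply/integrableP; split; first exact/measurable_realfun.measurable_EFinP.
apply: (@le_lt_trans _ _ (\int[P]_w (cst M%:E w))).
  apply: ge0_le_integral => //.
  - apply/(measurable_realfun.measurable_EFinP _ (fun x => `|f x|)%R).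
    by apply: measurableT_comp => //; exact: measurable_realfun.normr_measurable.
  - by move=> w _; rewrite /= lee_fin.
rewrite integral_cst //; set p := (X in _ * X); have -> : p = 1 by exact: probability_setT.
by rewrite mule1 ltry.
Qed.

Lemma sum_int d (Omega : measurableType d) (R : realType) (P : probability Omega R)
  (I : Type) (s : seq I) (h : I -> Omega -> R) :
  (forall i, P.-integrable setT (fun w => (h i w)%:E)) ->
  P.-integrable setT (fun w => (\sum_(i <- s) h i w)%:E) /\
  \int[P]_w (\sum_(i <- s) h i w)%:E = \sum_(i <- s) \int[P]_w (h i w)%:E.
Proof.
move=> hi; split.
  apply: (eq_integrable _ (fun w => \sum_(i <- s) (h i w)%:E)) => //.
    by move=> w _; rewrite sumEFin.
  by apply: integrable_sum => // i _; exact: hi.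
rewrite -integral_sum //; apply: eq_integral => w _; by rewrite sumEFin.
Qed.

Lemma scale_int d (Omega : measurableType d) (R : realType) (P : probability Omega R)
  (c : R) (h : Omega -> R) :
  P.-integrable setT (fun w => (h w)%:E) ->
  P.-integrable setT (fun w => (c * h w)%:E) /\
  \int[P]_w (c * h w)%:E = c%:E * \int[P]_w (h w)%:E.
Proof.
move=> hi; split.
  apply: (eq_integrable _ (fun w => c%:E * (h w)%:E)) => //.
  exact: integrableZl.
rewrite -integralZl //.
Qed.

End helpers.

Theorem mainTheorem5 (d : measure_display) (Omega : measurableType d)
  (R : realType) (P : probability Omega R) (K T : nat)
  (ell : nat -> 'I_K -> Omega -> R)
  (Avail : nat -> Omega -> {set 'I_K}) (Pick : nat -> Omega -> 'I_K)
  (mu : 'I_K -> R) (sigma_star : {perm 'I_K}) (k : 'I_K) :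
  (* losses are random variables with values in [0,1] *)
  (forall t j, measurable_fun setT (ell t j)) ->
  (forall t j w, 0 <= ell t j w <= 1) ->
  (* availability sets and chosen arms are random variables *)
  (forall t A, measurable (Avail t @^-1` [set A])) ->
  (forall t i, measurable (Pick t @^-1` [set i])) ->
  (* S_t nonempty and k_t \in S_t *)
  (forall t w, Avail t w != finset.set0) ->
  (forall t w, Pick t w \in Avail t w) ->
  (* identically distributed loss vectors *)
  (forall t (B : 'I_K -> set R), (forall j, measurable (B j)) ->
     P [set w | forall j, B j (ell t j w)] = P [set w | forall j, B j (ell 0%N j w)]) ->
  (* ell_t independent of everything determined before ell_t(k_t) is observed *)
  (forall t, indep_sys P (gen_sigma (loss_events ell t))
                         (gen_sigma (history_events ell Avail Pick t))) ->
  (* mu is the mean vector *)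
  (forall t j, (\int[P]_w (ell t j w)%:E = (mu j)%:E)%E) ->
  (* sigma_star sorts the arms by nondecreasing mean *)
  (forall i j : 'I_K, (i <= j)%N -> mu (sigma_star i) <= mu (sigma_star j)) ->
  (\int[P]_w (ext_regret ell Avail Pick T k w)%:E
     <= \int[P]_w (ordering_regret ell Avail Pick T sigma_star w)%:E)%E.
Proof.
move=> mell ell01 mAv mPi Ane Pin _ indep mean sorted.
pose E t i A := Pick t @^-1` [set i] `&` Avail t @^-1` [set A].
have mE : forall t i A, measurable (E t i A) by move=> t i A; exact: measurableI.
have hE : forall t i A, gen_sigma (history_events ell Avail Pick t) (E t i A).
  move=> t i A.
  have [_ _ _ hI] := proj1 (sigma_algebraP (fun X _ => @subsetT _ X))
    (@smallest_sigma_algebra _ setT (history_events ell Avail Pick t)).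
  apply: hI; apply: sub_sigma_algebra.
  - by right; left; exists t, i.
  - by left; exists t, A.
have atom_int : forall t i A j,
    P.-integrable setT (fun w => (\1_(E t i A) w * ell t j w)%:E).
  move=> t i A j; apply: (@bnd_int _ _ _ P _ _ 1).
    apply: measurable_realfun.measurable_funM => //; exact: measurable_indic.
  move=> w; rewrite normrM indicE; have /andP[h0 h1] := ell01 t j w.
  rewrite (ger0_norm h0); case: (w \in E t i A); rewrite /= ?normr1 ?normr0 ?mul1r ?mul0r //.
have atom_val : forall t i A j,
    (\int[P]_w (\1_(E t i A) w * ell t j w)%:E = P (E t i A) * (mu j)%:E)%E.
  move=> t i A j; rewrite -(mean t j); apply: indep_key => //.
  - by move=> w; have /andP[] := ell01 t j w.
  - move=> B mB; rewrite setIC muleC (indep t) //.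
    by apply: sub_sigma_algebra; exists j, B; split.
have decomp : forall t w (F : 'I_K -> {set 'I_K} -> R),
    F (Pick t w) (Avail t w) =
    \sum_(i < K) \sum_(A : {set 'I_K}) \1_(E t i A) w * F i A.
  move=> t w F; rewrite (bigD1 (Pick t w)) //= (bigD1 (Avail t w)) //=.
  rewrite indicE mem_set; last by split.
  rewrite mul1r big1 ?addr0; last first.
    move=> A hA; rewrite indicE memNset ?mul0r //.
    by move=> [_ /= hA']; move: hA; rewrite hA' eqxx.
  rewrite big1 ?addr0 // => i hi; rewrite big1 // => A _.
  rewrite indicE memNset ?mul0r //.
  by move=> [/= hp _]; move: hi; rewrite hp eqxx.
have lin : forall c : nat -> 'I_K -> {set 'I_K} -> 'I_K -> R,
  (\int[P]_w (\sum_(t < T) \sum_(i < K) \sum_(A : {set 'I_K}) \sum_(j < K)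
        c t i A j * (\1_(E t i A) w * ell t j w))%:E
   = \sum_(t < T) \sum_(i < K) \sum_(A : {set 'I_K}) \sum_(j < K)
        (c t i A j)%:E * (P (E t i A) * (mu j)%:E))%E.
  move=> c.
  have L4 : forall (t : nat) i A,
      P.-integrable setT (fun w => (\sum_(j < K) c t i A j * (\1_(E t i A) w * ell t j w))%:E) /\
      (\int[P]_w (\sum_(j < K) c t i A j * (\1_(E t i A) w * ell t j w))%:E
       = \sum_(j < K) (c t i A j)%:E * (P (E t i A) * (mu j)%:E))%E.
    move=> t i A.
    have [h1 h2] := @sum_int _ _ _ P _ (index_enum 'I_K)
      (fun j w => c t i A j * (\1_(E t i A) w * ell t j w))
      (fun j => (@scale_int _ _ _ P _ _ (atom_int t i A j)).1).
    split => //; rewrite h2; apply: eq_bigr => j _.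
    by rewrite (@scale_int _ _ _ P _ _ (atom_int t i A j)).2 atom_val.
  have L3 : forall (t : nat) i,
      P.-integrable setT (fun w => (\sum_(A : {set 'I_K}) \sum_(j < K) c t i A j * (\1_(E t i A) w * ell t j w))%:E) /\
      (\int[P]_w (\sum_(A : {set 'I_K}) \sum_(j < K) c t i A j * (\1_(E t i A) w * ell t j w))%:E
       = \sum_(A : {set 'I_K}) \sum_(j < K) (c t i A j)%:E * (P (E t i A) * (mu j)%:E))%E.
    move=> t i.
    have [h1 h2] := @sum_int _ _ _ P _ (index_enum {set 'I_K})
      (fun A w => \sum_(j < K) c t i A j * (\1_(E t i A) w * ell t j w))
      (fun A => (L4 t i A).1).
    by split => //; rewrite h2; apply: eq_bigr => A _; rewrite (L4 t i A).2.
  have L2 : forall (t : nat),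
      P.-integrable setT (fun w => (\sum_(i < K) \sum_(A : {set 'I_K}) \sum_(j < K) c t i A j * (\1_(E t i A) w * ell t j w))%:E) /\
      (\int[P]_w (\sum_(i < K) \sum_(A : {set 'I_K}) \sum_(j < K) c t i A j * (\1_(E t i A) w * ell t j w))%:E
       = \sum_(i < K) \sum_(A : {set 'I_K}) \sum_(j < K) (c t i A j)%:E * (P (E t i A) * (mu j)%:E))%E.
    move=> t.
    have [h1 h2] := @sum_int _ _ _ P _ (index_enum 'I_K)
      (fun i w => \sum_(A : {set 'I_K}) \sum_(j < K) c t i A j * (\1_(E t i A) w * ell t j w))
      (fun i => (L3 t i).1).
    by split => //; rewrite h2; apply: eq_bigr => i _; rewrite (L3 t i).2.
  have [h1 h2] := @sum_int _ _ _ P _ (index_enum 'I_T)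
    (fun (t : 'I_T) w => \sum_(i < K) \sum_(A : {set 'I_K}) \sum_(j < K) c t i A j * (\1_(E t i A) w * ell t j w))
    (fun t => (L2 t).1).
  by rewrite h2; apply: eq_bigr => t _; rewrite (L2 t).2.
pose cext (t : nat) (i : 'I_K) (A : {set 'I_K}) (j : 'I_K) :=
  (k \in A)%:R * ((j == i)%:R - (j == k)%:R) : R.
pose cord (t : nat) (i : 'I_K) (A : {set 'I_K}) (j : 'I_K) :=
  (j == i)%:R - (j == ordering_choice sigma_star A i)%:R : R.
rewrite (eq_integral (fun w => (\sum_(t < T) \sum_(i < K) \sum_(A : {set 'I_K}) \sum_(j < K)
        cext t i A j * (\1_(E t i A) w * ell t j w))%:E)); last first.
  move=> w _; congr EFin; rewrite /ext_regret; apply: eq_bigr => t _.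
  have dc := decomp t w (fun i A => (ell t i w - ell t k w) * (k \in A)%:R).
  rewrite /= in dc; rewrite dc; apply: eq_bigr => i _; apply: eq_bigr => A _.
  rewrite [RHS](_ : _ = \1_(E t i A) w * ((k \in A)%:R *
      \sum_(j < K) (((j == i)%:R - (j == k)%:R) * ell t j w))); last first.
    by rewrite !mulr_sumr; apply: eq_bigr => j _; rewrite /cext mulrCA !mulrA.
  by rewrite sum_delta [_ * (k \in A)%:R]mulrC.
rewrite [X in (_ <= X)%E](eq_integral (fun w => (\sum_(t < T) \sum_(i < K) \sum_(A : {set 'I_K}) \sum_(j < K)
        cord t i A j * (\1_(E t i A) w * ell t j w))%:E)); last first.
  move=> w _; congr EFin; rewrite /ordering_regret; apply: eq_bigr => t _.
  have dc := decomp t w (fun i A => ell t i w - ell t (ordering_choice sigma_star A i) w).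
  rewrite /= in dc; rewrite dc; apply: eq_bigr => i _; apply: eq_bigr => A _.
  rewrite [RHS](_ : _ = \1_(E t i A) w *
      \sum_(j < K) (((j == i)%:R - (j == ordering_choice sigma_star A i)%:R) * ell t j w)); last first.
    by rewrite !mulr_sumr; apply: eq_bigr => j _; rewrite /cord mulrCA.
  by rewrite sum_delta.
rewrite !lin.
apply: lee_sum => t _; apply: lee_sum => i _; apply: lee_sum => A _.
set p := fine (P (E t i A)).
have hp : P (E t i A) = p%:E by rewrite fineK // fin_num_measure.
have p0 : 0 <= p by rewrite /p fine_ge0 // measure_ge0.
rewrite hp.
under eq_bigr do rewrite -!EFinM mulrCA.
under [X in (_ <= X)%E]eq_bigr do rewrite -!EFinM mulrCA.
rewrite !sumEFin lee_fin -!mulr_sumr.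
case: (eqVneq p 0) => [->|pn0]; first by rewrite !mul0r.
have : E t i A !=set0.
  apply/set0P/negP => /eqP h; move: pn0; by rewrite /p h measure0 eqxx.
move=> [w [/= hwi hwA]].
have iA : i \in A by rewrite -hwi -hwA Pin.
apply: ler_wpM2l => //.
under eq_bigr do rewrite /cext -mulrA.
rewrite -mulr_sumr /cord !sum_delta.
case kA : (k \in A).
- rewrite mul1r; have [m [-> [hm _]]] := oc_spec _ sigma_star A i k kA.
  by rewrite lerD2l lerN2; have := sorted _ _ hm; rewrite permKV.
- rewrite mul0r; have [m [-> [hm _]]] := oc_spec _ sigma_star A i i iA.
  by rewrite subr_ge0; have := sorted _ _ hm; rewrite permKV.
Qed.
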